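(* Let $B$ be an $n\times n$ matrix of non-negative integers whose last $n-m$ rows are zero, where $m\neq n$. Suppose $A=J_{nm}+B=(a_{kl})$ is irreducible and its top-left $m\times m$ corner is irreducible. Let $x_1,\dots,x_n$ be non-negative integers, not all zero, and let $m<j\le n$. Let $A'$ be the $(n+1)\times(n+1)$ matrix defined as follows: - its first row is $(x_j,x_1,x_2,\dots,x_n)$; - for $i=1,\dots,m$, its $(i+1)$-st row is $(a_{ij},a_{i1},a_{i2},\dots,a_{in})$; - its last $n-m$ rows consist entirely of $\infty$. Then $A\sim_M A'$.
   Context: $J_{nm}$ ($0\le m\le n$) is the $n\times n$ matrix whose $i$-th row, for $i\le m$, has a $1$ in position $i$ and $0$ elsewhere, and whose last $n-m$ rows consist entirely of $\infty$. Arithmetic convention: $\infty+a=\infty$. For an $X\times X$ matrix $A$ with entries in $\{0,1,2,\dots\}\cup\{\infty\}$, $G_A$ is the graph with vertex set $X$ and exactly $A(x,y)$ edges from $x$ to $y$. A matrix $A$ is irreducible if $G_A$ is strongly connected. For matrices, $A\sim_M B$ means $G_A\sim_M G_B$. A graph may have multiple edges and loops. A source receives no edges, a sink emits no edges, and an infinite emitter emits infinitely many edges. A vertex is singular if it is a sink or infinite emitter, and regular otherwise. Move-equivalence $\sim_M$ is the smallest equivalence relation on graphs with finitely many vertices such that $G\sim_M E$ whenever $E$ is isomorphic to a graph obtained from $G$ by one of the following moves. (S) Delete a regular source together with the edges it emits. (R) For a regular vertex $u$ emitting exactly one edge $f$, with $r(f)\neq u$, and all of whose incoming edges have the same source $v$: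 delete $u$, $f$ and the edges into $u$, and add for each $e\in r^{-1}(u)$ an edge $[ef]$ from $v$ to $r(f)$. (O) Out-splitting at a non-sink $v$ along a partition $\mathcal E_1,\dots,\mathcal E_n$ of $s^{-1}(v)$ with at most one infinite part. Replace $v$ by $v^1,\dots,v^n$. Each edge $e$ into $v$ becomes copies $e^1,\dots,e^n$ with $r(e^i)=v^i$ and source $s(e)$, or source $v^j$ if $s(e)=v$ and $e\in\mathcal E_j$. An edge from $v$ to $w\neq v$ lying in $\mathcal E_i$ gets source $v^i$. (I) In-splitting at a regular non-source $v$ along a partition $\mathcal E_1,\dots,\mathcal E_n$ of $r^{-1}(v)$. Replace $v$ by $v^1,\dots,v^n$. Each edge $e$ out of $v$ becomes copies $e^1,\dots,e^n$ with $s(e^i)=v^i$ and range $r(e)$, or range $v^j$ if $r(e)=v$ and $e\in\mathcal E_j$. An edge into $v$ from $w\neq v$ lying in $\mathcal E_i$ gets range $v^i$. *)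

(* Defs.v *)
From mathcomp Require Import all_boot all_algebra.
From Stdlib Require Import Relations.
Set Implicit Arguments. Unset Strict Implicit. Unset Printing Implicit Defensive.

Record graph := Graph {
  gV : finType;
  gE : Type;
  gs : gE -> gV;
  gr : gE -> gV
}.

Section GraphNotions.
Variable G : graph.

Definition source (v : gV G) : Prop := forall e, gr e <> v.
Definition sink (v : gV G) : Prop := forall e, gs e <> v.

Definition finite_edges (Q : gE G -> Prop) : Prop :=
  exists (k : nat) (g : 'I_k -> gE G), forall e, Q e -> exists i, g i = e.

Definition infinite_emitter (v : gV G) : Prop :=
  ~ finite_edges (fun e => gs e = v).
Definition singular (v : gV G) : Prop := sink v \/ infinite_emitter v.
Definition regular (v : gV G) : Prop := ~ singular v.

Definition adj (x y : gV G) : Prop := exists e, gs e = x /\ gr e = y.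
Definition strongly_connected : Prop :=
  forall x y : gV G, clos_refl_trans (gV G) adj x y.
End GraphNotions.

Definition realizes (H : graph) (V : finType) (P : V -> Prop) (E' : Type)
    (s' r' : E' -> V) : Prop :=
  exists (fV : gV H -> V) (fE : gE H -> E'),
    injective fV /\ (forall w, P w <-> exists x, fV x = w) /\ bijective fE /\
    forall e, fV (gs e) = s' (fE e) /\ fV (gr e) = r' (fE e).
Arguments realizes H {V} P E' s' r'.

Definition move_S (G H : graph) : Prop :=
  exists v : gV G, regular v /\ source v /\
    realizes H (fun w => w <> v) {e : gE G | gs e <> v}
      (fun e => gs (proj1_sig e)) (fun e => gr (proj1_sig e)).

Definition R_edges (G : graph) (u : gV G) : Type :=
  ({e : gE G | gs e <> u /\ gr e <> u} + {e : gE G | gr e = u})%type.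

Definition move_R (G H : graph) : Prop :=
  exists (u v : gV G) (f : gE G),
    regular u /\ (forall e, gs e = u <-> e = f) /\ gr f <> u /\
    (forall e, gr e = u -> gs e = v) /\
    realizes H (fun w => w <> u) (R_edges u)
      (fun e => match e with inl e => gs (proj1_sig e) | inr _ => v end)
      (fun e => match e with inl e => gr (proj1_sig e) | inr _ => gr f end).

(** New vertices: V \ {v} (as inl) and v^1..v^n
    (as inr i). *)
Definition out_part (G : graph) (v : gV G) (k : nat) (p : gE G -> 'I_k)
  (i : 'I_k) : gE G -> Prop := fun e => gs e = v /\ p e = i.

Definition move_O (G H : graph) : Prop :=
  exists (v : gV G) (k : nat) (p : gE G -> 'I_k),
    ~ sink v /\
    (forall i, exists e, out_part v p i e) /\
    (forall i i', ~ finite_edges (out_part v p i) ->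
                  ~ finite_edges (out_part v p i') -> i = i') /\
    let sv e : (gV G + 'I_k)%type :=
        if gs e == v then inr (p e) else inl (gs e) in
    realizes H
      (fun w : (gV G + 'I_k)%type =>
          match w with inl x => x <> v | inr _ => True end)
      ({e : gE G | gr e <> v} + ({e : gE G | gr e = v} * 'I_k))%type
      (fun e => match e with inl e => sv (proj1_sig e)
                           | inr (e, _) => sv (proj1_sig e) end)
      (fun e => match e with inl e => inl (gr (proj1_sig e))
                           | inr (_, i) => inr i end).

Definition move_I (G H : graph) : Prop :=
  exists (v : gV G) (k : nat) (p : gE G -> 'I_k),
    regular v /\ ~ source v /\
    (forall i, exists e, gr e = v /\ p e = i) /\
    let rv e : (gV G + 'I_k)%type :=
        if gr e == v then inr (p e) else inl (gr e) in
    realizes H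
      (fun w : (gV G + 'I_k)%type =>
          match w with inl x => x <> v | inr _ => True end)
      ({e : gE G | gs e <> v} + ({e : gE G | gs e = v} * 'I_k))%type
      (fun e => match e with inl e => inl (gs (proj1_sig e))
                           | inr (_, i) => inr i end)
      (fun e => match e with inl e => rv (proj1_sig e)
                           | inr (e, _) => rv (proj1_sig e) end).

Definition move_step (G H : graph) : Prop :=
  move_S G H \/ move_R G H \/ move_O G H \/ move_I G H.

(** Move equivalence: the smallest equivalence relation containing the moves
    (up to isomorphism, built into [realizes]). *)
Definition move_equiv : graph -> graph -> Prop :=
  clos_refl_sym_trans graph move_step.

Inductive natinf := Fin of nat | Inf.

Definition addinf (a b : natinf) : natinf :=
  match a, b with Fin x, Fin y => Fin (x + y) | _, _ => Inf end.

Definition ltinf (k : nat) (a : natinf) : bool :=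
  match a with Fin x => k < x | Inf => true end.

(** G_A: vertex set 'I_N, exactly A x y edges from x to y *)
Definition graph_of (N : nat) (A : 'M[natinf]_N) : graph :=
  @Graph 'I_N {t : 'I_N * 'I_N * nat | ltinf t.2 (A t.1.1 t.1.2)}
    (fun t => (proj1_sig t).1.1) (fun t => (proj1_sig t).1.2).

Definition irreducible (N : nat) (A : 'M[natinf]_N) : Prop :=
  strongly_connected (graph_of A).

Definition matrix_move_equiv (N N' : nat) (A : 'M[natinf]_N)
  (A' : 'M[natinf]_N') : Prop := move_equiv (graph_of A) (graph_of A').

(** J_{nm} (0-indexed rows: rows i < m are unit rows, the others are ∞) *)
Definition Jnm (n m : nat) : 'M[natinf]_n :=
  \matrix_(i < n, k < n) if (i < m)%N then Fin (i == k : nat) else Inf.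

Definition JplusB (n m : nat) (B : 'M[nat]_n) : 'M[natinf]_n :=
  \matrix_(i < n, k < n) addinf (Jnm n m i k) (Fin (B i k)).

Definition corner (n m : nat) (H : (m <= n)%N) (A : 'M[natinf]_n)
  : 'M[natinf]_m :=
  \matrix_(i < m, k < m) A (widen_ord H i) (widen_ord H k).

(** The (n+1)x(n+1) matrix A' of the statement (0-indexed; j is the
    0-indexed version of the paper's j). Row/column 0 is the new one;
    row/column c+1 corresponds to the old index c. *)
Definition shift_row (n : nat) (j : 'I_n) (f : 'I_n -> natinf)
  (c : 'I_n.+1) : natinf :=
  match unlift ord0 c with None => f j | Some k => f k end.

Definition Aprime (n m : nat) (A : 'M[natinf]_n) (x : 'I_n -> nat)
  (j : 'I_n) : 'M[natinf]_n.+1 :=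
  \matrix_(r < n.+1, c < n.+1)
    match unlift ord0 r with
    | None => shift_row j (fun k => Fin (x k)) c
    | Some i => if (i < m)%N then shift_row j (A i) c else Inf
    end.

(* Main.v *)
Require Import Defs.
From mathcomp Require Import all_boot all_algebra.
From Stdlib Require Import Relations ProofIrrelevance.
Set Implicit Arguments. Unset Strict Implicit. Unset Printing Implicit Defensive.

Lemma sig_eq {T : Type} {P : T -> Prop} (a b : sig P) :
  proj1_sig a = proj1_sig b -> a = b.
Proof. case: a b => [a ha] [b hb] /= e; subst; f_equal; apply proof_irrelevance. Qed.

Section Pf.
Variables (n m : nat) (A : 'M[natinf]_n) (x : 'I_n -> nat) (j : 'I_n).
Hypothesis Hrow : forall k b : 'I_n, (m <= k)%N -> A k b = Inf.
Hypothesis Hj : (m <= j)%N.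
Hypothesis Hx : exists k, x k <> 0%N.

Notation A' := (Aprime m A x j).
Notation G := (graph_of A).
Notation H := (graph_of A').

Definition colmap (c : 'I_n.+1) : 'I_n :=
  match unlift ord0 c with None => j | Some k => k end.

Lemma A'0 c : A' ord0 c = Fin (x (colmap c)).
Proof. by rewrite mxE unlift_none /shift_row /colmap; case: unlift. Qed.

Lemma A'S k c : A' (lift ord0 k) c = A k (colmap c).
Proof.
rewrite mxE liftK; case: ifP => hk.
  by rewrite /shift_row /colmap; case: unlift.
by rewrite Hrow // leqNgt hk.
Qed.

Lemma rowj b t : ltinf t (A j b).
Proof. by rewrite Hrow. Qed.

Definition backT (u : 'I_n.+1 * 'I_n.+1 * nat) : 'I_n * 'I_n * nat :=
  let: (r, c, t) := u in let b := colmap c in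
  match unlift ord0 r with
  | None => (j, b, t)
  | Some k => if k == j then (j, b, t + x b) else (k, b, t) end.

Lemma backP u : ltinf u.2 (A' u.1.1 u.1.2) ->
  ltinf (backT u).2 (A (backT u).1.1 (backT u).1.2).
Proof.
case: u => [[r c] t] /=; case: unliftP => [k ->|->] /=.
  case: eqP => [->|_]; first by rewrite rowj.
  by rewrite A'S.
by rewrite rowj.
Qed.

Definition colT (b : 'I_n) (i : 'I_2) : 'I_n.+1 :=
  if b == j then (if i == ord0 then ord0 else lift ord0 j) else lift ord0 b.

Lemma colmapT b i : colmap (colT b i) = b.
Proof.
rewrite /colT /colmap; case: eqP => [->|_]; last by rewrite liftK.
by case: ifP => _; rewrite ?unlift_none ?liftK.
Qed.

Definition fwdT (u : 'I_n * 'I_n * nat) (i : 'I_2) : 'I_n.+1 * 'I_n.+1 * nat :=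
  let: (a, b, t) := u in
  if a == j then (if t < x b then (ord0, colT b i, t)
                  else (lift ord0 j, colT b i, t - x b))
  else (lift ord0 a, colT b i, t).

Lemma fwdP i u : ltinf u.2 (A u.1.1 u.1.2) ->
  ltinf (fwdT u i).2 (A' (fwdT u i).1.1 (fwdT u i).1.2).
Proof.
case: u => [[a b] t] /= h; case: eqP => [ea|na].
  case: ifP => ht /=; first by rewrite A'0 colmapT.
  by rewrite A'S rowj.
by rewrite A'S colmapT.
Qed.

Definition copyc (c : 'I_n.+1) : 'I_2 := if c == ord0 then ord0 else ord_max.

Lemma colT_colmap c : colT (colmap c) (copyc c) = c.
Proof.
rewrite /colT /colmap /copyc; case: unliftP => [k ->|->].
  have -> : (lift ord0 k == ord0) = false.
    by apply/negbTE; apply/eqP => /(congr1 val); rewrite /= /bump leq0n.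
  by case: eqP => [->|].
by rewrite eqxx eqxx.
Qed.

Lemma backTK u i : backT (fwdT u i) = u.
Proof.
case: u => [[a b] t] /=; case: eqP => [->|na].
  case: ifP => ht /=; first by rewrite unlift_none colmapT.
  by rewrite liftK eqxx colmapT subnK // leqNgt ht.
by rewrite /= liftK colmapT; case: eqP.
Qed.

Lemma fwdTK v : ltinf v.2 (A' v.1.1 v.1.2) -> fwdT (backT v) (copyc v.1.2) = v.
Proof.
case: v => [[r c] t] /=; case: unliftP => [k ->|->] /=.
  rewrite A'S; case: eqP => [->|nk] /= h.
    by rewrite eqxx ltnNge leq_addl /= addnK colT_colmap.
  by move/eqP/negbTE: nk => ->; rewrite colT_colmap.
by rewrite A'0 eqxx /= => ->; rewrite colT_colmap.
Qed.

Definition pp (e : gE G) : 'I_2 :=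
  if (proj1_sig e).2 < x (proj1_sig e).1.2 then ord0 else ord_max.

Definition fV (r : 'I_n.+1) : ('I_n + 'I_2)%type :=
  match unlift ord0 r with
  | None => inr ord0
  | Some k => if k == j then inr ord_max else inl k end.

Definition back (e : gE H) : gE G :=
  exist _ (backT (proj1_sig e)) (backP (proj2_sig e)).
Definition fwd (b : gE G) (i : 'I_2) : gE H :=
  exist _ (fwdT (proj1_sig b) i) (fwdP i (proj2_sig b)).

Definition Et := ({e : gE G | gr e <> j} + ({e : gE G | gr e = j} * 'I_2))%type.

Definition mkE (b : gE G) (i : 'I_2) : Et :=
  match (gr b =P j) with
  | ReflectT h => inr (exist _ b h, i)
  | ReflectF h => inl (exist _ b h)
  end.

Lemma mkE_in (b : gE G) i (h : gr b = j) : mkE b i = inr (exist _ b h, i).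
Proof.
rewrite /mkE; case: eqP => h'; last by case: h'.
by congr (inr (_, _)); apply: sig_eq.
Qed.

Lemma mkE_out (b : gE G) i (h : gr b <> j) : mkE b i = inl (exist _ b h).
Proof.
rewrite /mkE; case: eqP => h'; first by case: h.
by congr inl; apply: sig_eq.
Qed.

Definition fE (e : gE H) : Et := mkE (back e) (copyc (proj1_sig e).1.2).

Definition gg (e : Et) : gE H :=
  match e with inl e => fwd (proj1_sig e) ord0 | inr (e, i) => fwd (proj1_sig e) i end.

Lemma I2P (i : 'I_2) : i = ord0 \/ i = ord_max.
Proof. case: i => [[|[|//]] hi]; [left|right]; exact: val_inj. Qed.

Lemma fwdT_indep u i i' : u.1.2 <> j -> fwdT u i = fwdT u i'.
Proof.
case: u => [[a b] t] /= nb.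
have -> : colT b i = colT b i' by rewrite /colT; case: eqP.
by [].
Qed.

Lemma fwdT_col u i : (fwdT u i).1.2 = colT u.1.2 i.
Proof. by case: u => [[a b] t] /=; case: eqP => _ //; case: ifP. Qed.

Lemma copyc_colT i : copyc (colT j i) = i.
Proof.
rewrite /copyc /colT eqxx; case: (I2P i) => ->; first by rewrite eqxx.
have -> : ((ord_max : 'I_2) == ord0) = false by [].
have -> : (lift ord0 j == ord0) = false.
  by apply/negbTE; apply/eqP => /(congr1 val); rewrite /= /bump leq0n.
by [].
Qed.

Lemma backK b i : back (fwd b i) = b.
Proof. by apply: sig_eq; rewrite /= backTK. Qed.

Lemma fV_tgt c : fV c = if colmap c == j then inr (copyc c) else inl (colmap c).
Proof.
rewrite /fV /colmap /copyc; case: unliftP => [k ->|->]; last by rewrite !eqxx.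
have -> : (lift ord0 k == ord0) = false.
  by apply/negbTE; apply/eqP => /(congr1 val); rewrite /= /bump leq0n.
by case: eqP.
Qed.

Lemma fV_src (e : gE H) : fV (proj1_sig e).1.1 =
  (if gs (back e) == j then inr (pp (back e)) else inl (gs (back e))).
Proof.
case: e => [[[r c] t] h]; rewrite /back /pp /fV /=.
move: (backP h) => _.
move: h; rewrite /=; case: unliftP => [k ->|->] /=.
  rewrite A'S; case: eqP => [->|nk] /= h; first by rewrite eqxx ltnNge leq_addl.
  by move/eqP/negbTE: nk => ->.
by rewrite A'0 eqxx /= => ->.
Qed.

Lemma backT_col v : (backT v).1.2 = colmap v.1.2.
Proof. by case: v => [[r c] t] /=; case: unlift => // k; case: eqP. Qed.

Lemma main : move_O G H.
Proof.
exists (j : gV (graph_of A)), 2, pp.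
split; first by move=> hs; exact: (hs (exist _ (j, j, 0) (rowj j 0)) erefl).
split.
  move=> i; case: Hx => k hk; case: (I2P i) => ->.
    exists (exist _ (j, k, 0) (rowj k 0)); split => //.
    by rewrite /pp /= lt0n; move/eqP/negbTE: hk => ->.
  exists (exist _ (j, j, x j) (rowj j (x j))); split => //.
  by rewrite /pp /= ltnn.
split.
  have fin0 : finite_edges (@out_part G j 2 pp ord0).
    pose M := \max_(b < n) x b.
    exists #|{: 'I_n * 'I_M}|,
      (fun i => exist _ (j, (enum_val i).1, val (enum_val i).2) (rowj _ _)).
    move=> [[[a b] t] h] [/= ea]; rewrite /pp /=; case: ifP => // ht _.
    subst a.
    have hM : t < M by apply: (leq_trans ht); rewrite /M; exact: (@leq_bigmax _ x b).
    exists (enum_rank (b, Ordinal hM)); apply: sig_eq; by rewrite /= enum_rankK.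
  move=> i i'; case: (I2P i) => ->; first by move=> /(_ fin0).
  by case: (I2P i') => -> // _ /(_ fin0).
move=> sv.
exists fV, fE; split.
  move=> r1 r2; rewrite /fV.
  case: unliftP => [k1 ->|->]; case: unliftP => [k2 ->|->] //.
  - case: eqP => [->|n1]; case: eqP => [->|n2] // [] -> //.
  - by case: eqP.
  - by case: eqP.
split.
  case=> [w|i]; split.
  - move=> nw; exists (lift ord0 w); rewrite /fV liftK; by case: eqP.
  - case=> r; rewrite /fV; case: unliftP => [k _|_] //.
    by case: eqP => // nk [] <-.
  - move=> _; case: (I2P i) => ->; first by exists ord0; rewrite /fV unlift_none.
    by exists (lift ord0 j); rewrite /fV liftK eqxx.
  - by [].
split.
  exists gg.
    move=> e; rewrite /fE.
    case: (gr (back e) =P j) => h; [rewrite (mkE_in _ h) | rewrite (mkE_out _ h)];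
      apply: sig_eq => /=.
      by rewrite fwdTK //; exact: (proj2_sig e).
    rewrite (@fwdT_indep _ ord0 (copyc (proj1_sig e).1.2)); last exact: h.
    by rewrite fwdTK //; exact: (proj2_sig e).
  case=> [[b h]|[[b h] i]]; rewrite /fE /gg /=.
    rewrite backK (mkE_out _ h); congr inl; exact: sig_eq.
  rewrite backK fwdT_col /=.
  have -> : (proj1_sig b).1.2 = j by exact: h.
  by rewrite copyc_colT (mkE_in _ h).
move=> e; rewrite /fE.
case: (gr (back e) =P j) => h; [rewrite (mkE_in _ h) | rewrite (mkE_out _ h)];
  rewrite /= /sv fV_src; split => //; rewrite fV_tgt.
  by move: h; rewrite /= backT_col => ->; rewrite eqxx.
by move: h; rewrite /= !backT_col => /eqP/negbTE ->.
Qed.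

End Pf.

Theorem lemma8p1 (n m : nat) (Hmn : (m <= n)%N) (B : 'M[nat]_n)
    (x : 'I_n -> nat) (j : 'I_n) :
  m <> n ->
  (forall i k : 'I_n, (m <= i)%N -> B i k = 0%N) ->
  irreducible (JplusB m B) ->
  irreducible (corner Hmn (JplusB m B)) ->
  (exists k, x k <> 0%N) ->
  (m <= j)%N ->
  matrix_move_equiv (JplusB m B) (Aprime m (JplusB m B) x j).
Proof.
move=> _ _ _ _ Hx Hj.
have Hrow : forall k b : 'I_n, (m <= k)%N -> JplusB m B k b = Inf.
  by move=> k b hk; rewrite !mxE ltnNge hk.
apply: rst_step; right; right; left.
exact: main Hrow Hj Hx.
Qed.
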